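(* For a generalised numerical semigroup $S\subseteq\mathbb{N}^d$ with $\mathcal{H}(S)\neq\emptyset$, the following are equivalent: (i) $S$ is a Frobenius GNS, i.e. $F_\prec(S)$ is the same gap for every relaxed monomial order $\prec$; (ii) $\mathcal{H}(S)$ has a unique maximal element with respect to the natural partial order; (iii) $PF(S)$ has a unique maximal element with respect to the natural partial order.
   Context: $\mathbb{N}=\{0,1,2,\dots\}$. A generalised numerical semigroup (GNS) is a submonoid $S\subseteq\mathbb{N}^d$ whose complement $\mathcal{H}(S)=\mathbb{N}^d\setminus S$ (the gaps) is finite. Natural partial order: $x\le y$ iff $x^{(i)}\le y^{(i)}$ for all $i$. A relaxed monomial order is a total order $\prec$ on $\mathbb{N}^d$ with (i) $v\prec w\Rightarrow v\prec w+u$ for all $u\in\mathbb{N}^d$, (ii) $0\prec v$ for all $v\ne0$; $F_\prec(S)=\max_\prec\mathcal{H}(S)$. A gap $P$ is pseudo-Frobenius if $P+s\in S$ for every nonzero $s\in S$; $PF(S)$ is the set of pseudo-Frobenius gaps. *)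

(* Defs.v *)
From mathcomp Require Import all_boot.
Set Implicit Arguments. Unset Strict Implicit. Unset Printing Implicit Defensive.

Definition pt (d : nat) := {ffun 'I_d -> nat}.

Definition pt0 (d : nat) : pt d := [ffun _ => 0].
Definition ptadd (d : nat) (x y : pt d) : pt d := [ffun i => x i + y i].

Definition ptle (d : nat) (x y : pt d) : Prop := forall i, x i <= y i.

Definition is_GNS (d : nat) (S : pred (pt d)) : Prop :=
  S (pt0 d) /\
  (forall x y, S x -> S y -> S (ptadd x y)) /\
  (exists s : seq (pt d), forall x, ~~ S x -> x \in s).

Definition gap (d : nat) (S : pred (pt d)) (x : pt d) : Prop := ~~ S x.

Definition relaxed_monomial_order (d : nat) (lt : pt d -> pt d -> Prop) : Prop :=
  (forall x, ~ lt x x) /\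
  (forall x y z, lt x y -> lt y z -> lt x z) /\
  (forall x y, x <> y -> lt x y \/ lt y x) /\
  (forall v w u, lt v w -> lt v (ptadd w u)) /\
  (forall v, v <> pt0 d -> lt (pt0 d) v).

Definition is_frobenius_wrt (d : nat) (lt : pt d -> pt d -> Prop)
  (S : pred (pt d)) (F : pt d) : Prop :=
  gap S F /\ forall h, gap S h -> h <> F -> lt h F.

Definition Frobenius_GNS (d : nat) (S : pred (pt d)) : Prop :=
  exists F : pt d, forall lt, relaxed_monomial_order lt -> is_frobenius_wrt lt S F.

Definition pseudo_frobenius (d : nat) (S : pred (pt d)) (P : pt d) : Prop :=
  gap S P /\ forall s, S s -> s <> pt0 d -> S (ptadd P s).

Definition maximal_in (d : nat) (A : pt d -> Prop) (m : pt d) : Prop :=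
  A m /\ forall x, A x -> ptle m x -> x = m.

Definition unique_maximal (d : nat) (A : pt d -> Prop) : Prop :=
  exists m, maximal_in A m /\ forall m', maximal_in A m' -> m' = m.

(* Main.v *)
From Stdlib Require Import Classical.
Require Import Defs.
From mathcomp Require Import all_boot zify.

Set Implicit Arguments. Unset Strict Implicit. Unset Printing Implicit Defensive.

Section Aux.
Variable d : nat.

Fixpoint lexl (l : seq 'I_d) (x y : pt d) : Prop :=
  match l with
  | [::] => False
  | j :: l' => x j < y j \/ (x j = y j /\ lexl l' x y)
  end.

Lemma lex_irr l x : ~ lexl l x x.
Proof. elim: l => [|j l IH] //= [|[_ H]]; [by rewrite ltnn | exact: IH]. Qed.

Lemma lex_trans l x y z : lexl l x y -> lexl l y z -> lexl l x z.
Proof.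
elim: l => [|j l IH] //= [H1|[E1 H1]] [H2|[E2 H2]].
- left; exact: ltn_trans H1 H2.
- by left; rewrite -E2.
- by left; rewrite E1.
- right; split; [by rewrite E1 | exact: IH].
Qed.

Lemma lex_tri l x y : lexl l x y \/ lexl l y x \/ (forall j, j \in l -> x j = y j).
Proof.
elim: l => [|j l IH] /=; first by right; right.
case: (ltngtP (x j) (y j)) => H; [by left; left | by right; left; left|].
case: IH => [A|[A|A]]; [by left; right | by right; left; right; split|].
right; right => k; rewrite inE => /orP[/eqP->//|]; exact: A.
Qed.

Lemma lex_add l v w u : lexl l v w -> lexl l v (ptadd w u).
Proof.
elim: l => [|j l IH] //= [H|[E H]]; rewrite ffunE.
- left; exact: leq_trans H (leq_addr _ _).
- case: (posnP (u j)) => U.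
  + right; rewrite U addn0; split => //; exact: IH.
  + left; rewrite E -[X in X < _]addn0 ltn_add2l //.
Qed.

Definition psum (x : pt d) := \sum_i x i.

Lemma ptle_anti (x y : pt d) : ptle x y -> ptle y x -> x = y.
Proof. move=> H1 H2; apply/ffunP => i; apply/eqP; by rewrite eqn_leq H1 H2. Qed.

Lemma psum_lt (x y : pt d) : ptle x y -> x <> y -> psum x < psum y.
Proof.
move=> H Ne.
have [i Hi] : exists i, x i < y i.
  apply: NNPP => C; apply: Ne; apply: ptle_anti => // j.
  rewrite leqNgt; apply/negP => Hj; apply: C; by exists j.
rewrite /psum (bigD1 i) //= [X in _ < X](bigD1 i) //=.
rewrite -addSn leq_add //; apply: leq_sum => j _; exact: H.
Qed.

Lemma exists_max (S : pred (pt d)) : is_GNS S ->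
  forall h, gap S h -> exists m, maximal_in (gap S) m /\ ptle h m.
Proof.
move=> [_ [_ [s Hs]]].
pose B := foldr (fun x acc => psum x + acc) 0 s.
have HB : forall x, gap S x -> psum x <= B.
  move=> x /Hs; rewrite /B; clear; elim: s => [|a s IH] //=.
  rewrite inE => /orP[/eqP->|/IH]; [exact: leq_addr|].
  move=> H; exact: leq_trans H (leq_addl _ _).
suff: forall n h, gap S h -> B - psum h <= n -> exists m, maximal_in (gap S) m /\ ptle h m.
  move=> K h Hh; exact: K _ h Hh (leqnn _).
elim=> [|n IH] h Hh Hn.
- exists h; split; last by [].
  split => // x Hx Hle; apply: NNPP => Ne.
  have := psum_lt Hle (fun E => Ne (esym E)); have := HB x Hx.
  move: Hn; lia.
- case: (classic (exists x, gap S x /\ ptle h x /\ x <> h)) => [[x [Hx [Hle Ne]]]|C].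
  + have Hlt := psum_lt Hle (fun E => Ne (esym E)).
    have HBx := HB x Hx.
    have [m [Mm Hm]] : exists m, maximal_in (gap S) m /\ ptle x m.
      apply: IH => //; move: Hn Hlt HBx; lia.
    exists m; split => // j; exact: leq_trans (Hle j) (Hm j).
  + exists h; split => //; split => // x Hx Hle.
    apply: NNPP => Ne; apply: C; by exists x.
Qed.
End Aux.

Lemma lex_order d (l : seq 'I_d) : (forall j, j \in l) -> relaxed_monomial_order (lexl l).
Proof.
move=> Hl.
split; [exact: lex_irr|split; [exact: lex_trans|split; [|split; [exact: lex_add|]]]].
- move=> x y Ne; case: (lex_tri l x y) => [|[|A]]; [by left|by right|].
  exfalso; apply: Ne; apply/ffunP => j; exact: A.
- move=> v Ne; case: (lex_tri l (pt0 d) v) => [//|[A|A]].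
  + exfalso; move: A; clear; elim: l => [|j l IH] //= [|[_ /IH]] //.
    by rewrite ffunE.
  + exfalso; apply: Ne; apply/ffunP => j; by rewrite -A.
Qed.

Lemma all_below d (S : pred (pt d)) : is_GNS S -> unique_maximal (gap S) ->
  exists m, maximal_in (gap S) m /\ forall h, gap S h -> ptle h m.
Proof.
move=> G [m [Mm U]]; exists m; split => // h Hh.
have [m' [Mm' Hm']] := exists_max G Hh; by rewrite -(U _ Mm').
Qed.

Lemma max_is_pf d (S : pred (pt d)) m : is_GNS S -> maximal_in (gap S) m ->
  pseudo_frobenius S m.
Proof.
move=> [_ [SA _]] [Gm Mm]; split => // s Ss Ns.
apply: NNPP => C; apply: Ns.
have E := Mm (ptadd m s) (introN idP C) (fun j => ltac:(by rewrite ffunE leq_addr)).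
apply/ffunP => j; move/ffunP: E => /(_ j); rewrite !ffunE => /eqP.
by rewrite -{2}[m j]addn0 eqn_add2l => /eqP.
Qed.

Lemma max_pf_iff d (S : pred (pt d)) m : is_GNS S ->
  maximal_in (gap S) m <-> maximal_in (pseudo_frobenius S) m.
Proof.
move=> G; split.
- move=> Mm; split; first exact: max_is_pf.
  move=> x [Gx _] Hle; exact: (proj2 Mm) x Gx Hle.
- move=> [[Gp Pp] Mp]; split => // h Hh Hle.
  have [m' [Mm' Hm']] := exists_max G Hh.
  have E : m' = m.
    apply: Mp; [exact: max_is_pf | move=> j; exact: leq_trans (Hle j) (Hm' j)].
  subst m'; apply: ptle_anti => //.
Qed.

Theorem mainTheorem2 (d : nat) (S : pred (pt d)) :
  is_GNS S -> (exists h, gap S h) ->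
  (Frobenius_GNS S <-> unique_maximal (gap S)) /\
  (unique_maximal (gap S) <-> unique_maximal (pseudo_frobenius S)).
Proof.
move=> G [h0 H0]; split; last first.
  split => -[m [Mm U]]; exists m; split.
  - by apply/max_pf_iff.
  - by move=> m' /(max_pf_iff _ G) /U.
  - by apply/(max_pf_iff _ G).
  - by move=> m' /(max_pf_iff _ G) /U.
split.
- move=> [F HF].
  have Below : forall h, gap S h -> ptle h F.
    move=> h Hh; apply: NNPP => C.
    have [i Hi] := not_all_ex_not _ _ C.
    have O := @lex_order _ (i :: enum 'I_d) (fun j => ltac:(by rewrite inE mem_enum orbT)).
    have [GF HF'] := HF _ O.
    have Ne : h <> F by move=> E; apply: Hi; rewrite E.
    have L1 := HF' h Hh Ne.
    have L2 : lexl (i :: enum 'I_d) F h by left; rewrite ltnNge; apply/negP.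
    exact: lex_irr (lex_trans L1 L2).
  have GF : gap S F.
    exact: (proj1 (HF _ (@lex_order _ (enum 'I_d) (fun j => ltac:(by rewrite mem_enum))))).
  exists F; split.
  + split => // x Hx Hle; exact: ptle_anti (Below x Hx) Hle.
  + move=> m' [Gm' Mm']; exact: esym (Mm' F GF (Below m' Gm')).
- move=> UM; have [m [[Gm _] Bm]] := all_below G UM.
  exists m => lt [Irr [Tr [Tot [Add _]]]]; split => // h Hh Ne.
  case: (Tot h m Ne) => // L; exfalso.
  have E : ptadd h [ffun j => m j - h j] = m.
    apply/ffunP => j; rewrite !ffunE subnKC //; exact: Bm.
  apply: (Irr m); rewrite -{2}E; exact: Add.
Qed.
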